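(* Let $G$ be a compact group, $H$ a normal subgroup, $K=G/H$ with quotient map $g\mapsto[g]$. Let $(l_n)_{n\in\mathbb{N}}$ be continuous length functions on $G$ converging uniformly on $G$ to $\widetilde{l_\infty}$ with $\widetilde{l_\infty}(g)=0$ for $g\in H$ and $\widetilde{l_\infty}(g)>0$ for $g\notin H$, and let $l_\infty$ be the function on $K$ defined by $l_\infty([g])=\widetilde{l_\infty}(g)$. For $n\in\mathbb{N}$ define $l_n^K([g])=\inf\{l_n(g'):g'\in G,\ [g']=[g]\}$. Then each $l_n^K$ is continuous on $K$, and $(l_n^K)_{n\in\mathbb{N}}$ converges uniformly on $K$ to $l_\infty$.
   Context: A length function on a group with unit $e$: $l\ge0$, $l(g)=0$ iff $g=e$, $l(g^{-1})=l(g)$, $l(gh)\le l(g)+l(h)$. *)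

(* Defs.v *)
From HB Require Import structures.
From mathcomp Require Import all_boot all_order all_algebra.
From mathcomp Require Import all_classical all_reals all_analysis.
Set Implicit Arguments. Unset Strict Implicit. Unset Printing Implicit Defensive.
Import Order.TTheory GRing.Theory Num.Theory.
Import numFieldNormedType.Exports.
Local Open Scope classical_set_scope.
Local Open Scope ring_scope.

Definition is_group (G : Type) (mul : G -> G -> G) (inv : G -> G) (e : G) : Prop :=
  [/\ forall x y z, mul x (mul y z) = mul (mul x y) z,
      forall x, mul e x = x /\ mul x e = x &
      forall x, mul (inv x) x = e /\ mul x (inv x) = e].

Definition is_compact_group (G : topologicalType)
  (mul : G -> G -> G) (inv : G -> G) (e : G) : Prop :=
  [/\ is_group mul inv e,
      continuous (fun p : G * G => mul p.1 p.2),
      continuous inv,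
      hausdorff_space G &
      compact [set: G]].

Definition is_normal_subgroup (G : Type) (mul : G -> G -> G) (inv : G -> G) (e : G)
  (H : set G) : Prop :=
  [/\ H e,
      forall x y, H x -> H y -> H (mul x y),
      forall x, H x -> H (inv x) &
      forall g x, H x -> H (mul (mul g x) (inv g))].

(* K together with q : G -> K is (a model of) the quotient topological space G/H
   with quotient map g |-> [g]: q is surjective, identifies exactly the cosets
   gH, and K carries the quotient topology. *)
Definition is_quotient_by (G : topologicalType) (mul : G -> G -> G) (inv : G -> G)
  (H : set G) (K : topologicalType) (q : G -> K) : Prop :=
  [/\ forall k : K, exists g, q g = k,
      forall g g', q g = q g' <-> H (mul (inv g) g') &
      forall U : set K, open U <-> open (q @^-1` U)].

Definition is_length_function (R : realType) (G : Type) (mul : G -> G -> G)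
  (inv : G -> G) (e : G) (l : G -> R) : Prop :=
  [/\ forall g, 0 <= l g,
      forall g, l g = 0 <-> g = e,
      forall g, l (inv g) = l g &
      forall g h, l (mul g h) <= l g + l h].

Definition unif_cvg (R : realType) (X : Type) (f : nat -> X -> R) (F : X -> R) : Prop :=
  forall eps : R, 0 < eps -> exists N : nat, forall n, (N <= n)%N ->
    forall x, `|f n x - F x| < eps.

Definition quot_length (R : realType) (G K : Type) (q : G -> K) (l : G -> R) (k : K) : R :=
  inf [set l g' | g' in q @^-1` [set k]].

(* Main.v *)
Require Import Defs.
From HB Require Import structures.
From mathcomp Require Import all_boot all_order all_algebra.
From mathcomp Require Import all_classical all_reals all_analysis.
From mathcomp Require Import lra.
Import Order.TTheory GRing.Theory Num.Theory.
Import numFieldNormedType.Exports.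
Local Open Scope classical_set_scope.
Local Open Scope ring_scope.

Lemma pc (G : topologicalType) (mul : G -> G -> G) (c : G) :
  continuous (fun p : G * G => mul p.1 p.2) ->
  continuous (fun g => mul g c) /\ continuous (fun g => mul c g).
Proof.
move=> cm; split => x.
  apply: (continuous_comp (f := fun g => (g, c)) (g := fun p : G * G => mul p.1 p.2)); last exact: cm.
  apply: cvg_pair; [exact: cvg_id | exact: cvg_cst].
apply: (continuous_comp (f := fun g => (c, g)) (g := fun p : G * G => mul p.1 p.2)); last exact: cm.
apply: cvg_pair; [exact: cvg_cst | exact: cvg_id].
Qed.

Lemma ql_lb (R : realType) (G K : Type) (q : G -> K) (l : G -> R) (g : G) :
  (forall x, 0 <= l x) -> quot_length q l (q g) <= l g.
Proof.
move=> l0; apply: ge_inf; last by exists g.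
by exists 0 => _ [x _ <-].
Qed.

Lemma ql_bound (R : realType) (G : topologicalType) (mul : G -> G -> G)
  (inv : G -> G) (e : G) (H : set G) (K : topologicalType) (q : G -> K) (l : G -> R) :
  is_group mul inv e -> is_quotient_by mul inv H q ->
  is_length_function mul inv e l ->
  forall g g0, quot_length q l (q g) <= l (mul g (inv g0)) + quot_length q l (q g0).
Proof.
move=> [assoc unit invP] [_ qH _] [l0 _ _ lsub] g g0.
suff : quot_length q l (q g) - l (mul g (inv g0)) <= quot_length q l (q g0) by lra.
apply: lb_le_inf; first by exists (l g0), g0.
move=> _ [g' /= qg' <-].
have qe : q (mul (mul g (inv g0)) g') = q g.
  symmetry; apply/qH.
  rewrite assoc assoc (invP g).1 (unit _).1.
  by apply/qH.
have := @ql_lb _ _ _ q l (mul (mul g (inv g0)) g') l0; rewrite qe => h.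
have := lsub (mul g (inv g0)) g'; lra.
Qed.

Theorem mainTheorem17 (R : realType) (G : topologicalType)
  (mul : G -> G -> G) (inv : G -> G) (e : G) (H : set G)
  (K : topologicalType) (q : G -> K)
  (l : nat -> G -> R) (ltil : G -> R) (linf : K -> R) :
  is_compact_group mul inv e ->
  is_normal_subgroup mul inv e H ->
  is_quotient_by mul inv H q ->
  (forall n, is_length_function mul inv e (l n)) ->
  (forall n, continuous (l n)) ->
  unif_cvg l ltil ->
  (forall g, H g -> ltil g = 0) ->
  (forall g, ~ H g -> 0 < ltil g) ->
  (forall g, linf (q g) = ltil g) ->
  (forall n, continuous (quot_length q (l n))) /\
  unif_cvg (fun n => quot_length q (l n)) linf.
Proof.
move=> [grp cm ci _ _] _ quo lf lc uc _ _ lq.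
have [qsurj qH qopen] := quo.
split.
  move=> n; apply/continuousP => A oA; apply/qopen.
  have cF : continuous (quot_length q (l n) \o q).
    move=> g0; apply/cvgrPdist_lt => eps e0.
    have [l0 le _ _] := lf n.
    have h1 : (fun g => l n (mul g (inv g0))) x @[x --> g0] --> l n (mul g0 (inv g0)).
      apply: continuous_comp; last exact: lc.
      exact: (@pc _ mul (inv g0) cm).1.
    have h2 : (fun g => l n (mul g0 (inv g))) x @[x --> g0] --> l n (mul g0 (inv g0)).
      apply: continuous_comp; last exact: lc.
      apply: continuous_comp; first exact: ci.
      exact: (@pc _ mul g0 cm).2.
    have z : l n (mul g0 (inv g0)) = 0 by apply/le; case: grp => _ _ /(_ g0) [].
    rewrite z in h1 h2.
    move/cvgrPdist_lt: h1 => /(_ eps e0) h1.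
    move/cvgrPdist_lt: h2 => /(_ eps e0) h2.
    near=> g.
    have a1 : `|0 - l n (mul g (inv g0))| < eps by near: g.
    have a2 : `|0 - l n (mul g0 (inv g))| < eps by near: g.
    rewrite sub0r normrN ger0_norm // in a1.
    rewrite sub0r normrN ger0_norm // in a2.
    have b1 := @ql_bound _ _ _ _ _ _ _ _ _ grp quo (lf n) g g0.
    have b2 := @ql_bound _ _ _ _ _ _ _ _ _ grp quo (lf n) g0 g.
    rewrite /= ltr_norml; apply/andP; split; lra.
  by have := (continuousP _).1 cF A oA.
move=> eps e0.
have e2 : 0 < eps / 2 by rewrite divr_gt0.
have [N hN] := uc _ e2.
exists N => n nN k.
have [g <-] := qsurj k.
rewrite lq.
have [l0 _ _ _] := lf n.
have up := @ql_lb _ _ _ q (l n) g l0.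
have up2 := hN n nN g.
have lo : ltil g - eps / 2 <= quot_length q (l n) (q g).
  apply: lb_le_inf; first by exists (l n g), g.
  move=> _ [g' /= qg' <-].
  have := hN n nN g'.
  have -> : ltil g' = ltil g by rewrite -!lq qg'.
  rewrite ltr_norml => /andP [? ?]; lra.
rewrite ltr_norml in up2; case/andP: up2 => ? ?.
rewrite ltr_norml; apply/andP; split; lra.
Unshelve. all: by end_near.
Qed.
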